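(* Let $d,n\ge 2$, $0\le\varepsilon\le 1/256$, and let $\mathcal U$ be a configuration of $n$ opinions in $\mathbb S^{d-1}$ that is $\varepsilon$-inactive. Then there is a unique partition of $[n]$ into clusters of $\mathcal U$. Furthermore, if $\varepsilon<\frac{1}{d(d+1)}$, then there are at most $d$ clusters.
   Context: Opinions are unit vectors in $\mathbb R^d$; a configuration is an $n$-tuple $(\vec u_1,\dots,\vec u_n)$, $A_{ij}=\langle\vec u_i,\vec u_j\rangle$. A configuration is $\varepsilon$-inactive if for all $i,j$, either $|A_{ij}|\le\varepsilon$ or $|A_{ij}|\ge 1-\varepsilon$. For an $\varepsilon$-inactive configuration, a nonempty set $C\subseteq[n]$ is a cluster if $|A_{ij}|\ge1-\varepsilon$ for all $i,j\in C$, and $|A_{ij}|\le\varepsilon$ for all $i\in C$, $j\notin C$. *)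

(* Defs.v *)
From mathcomp Require Import all_boot all_order all_algebra.
From mathcomp Require Import reals.
Set Implicit Arguments. Unset Strict Implicit. Unset Printing Implicit Defensive.
Import Order.TTheory GRing.Theory Num.Theory.
Local Open Scope ring_scope.

Definition inner (R : realType) (d : nat) (u v : 'rV[R]_d) : R := (u *m v^T) 0 0.

Definition on_sphere (R : realType) (d n : nat) (U : 'I_n -> 'rV[R]_d) : Prop :=
  forall i, inner (U i) (U i) = 1.

Definition Amat (R : realType) (d n : nat) (U : 'I_n -> 'rV[R]_d) (i j : 'I_n) : R :=
  inner (U i) (U j).

Definition eps_inactive (R : realType) (d n : nat) (U : 'I_n -> 'rV[R]_d) (eps : R) : Prop :=
  forall i j, `|Amat U i j| <= eps \/ 1 - eps <= `|Amat U i j|.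

Definition is_cluster (R : realType) (d n : nat) (U : 'I_n -> 'rV[R]_d) (eps : R)
  (C : {set 'I_n}) : Prop :=
  C != set0 /\
  (forall i j, i \in C -> j \in C -> 1 - eps <= `|Amat U i j|) /\
  (forall i j, i \in C -> j \notin C -> `|Amat U i j| <= eps).

Definition cluster_partition (R : realType) (d n : nat) (U : 'I_n -> 'rV[R]_d) (eps : R)
  (P : {set {set 'I_n}}) : Prop :=
  partition P [set: 'I_n] /\ (forall C, C \in P -> is_cluster U eps C).

(* Main.v *)
Require Import Defs.
From mathcomp Require Import all_boot all_order all_algebra.
From mathcomp Require Import reals.
From mathcomp Require Import ring lra.
Import Order.TTheory GRing.Theory Num.Theory.
Local Open Scope ring_scope.

Lemma innerE (R : realType) d (u v : 'rV[R]_d) :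
  inner u v = \sum_k u 0 k * v 0 k.
Proof. by rewrite /inner !mxE; apply: eq_bigr => k _; rewrite mxE. Qed.

Lemma innerC (R : realType) d (u v : 'rV[R]_d) : inner u v = inner v u.
Proof. by rewrite !innerE; apply: eq_bigr => k _; rewrite mulrC. Qed.

Lemma tri (R : realType) d (u v w : 'rV[R]_d) (s t : R) :
  inner u u = 1 -> inner v v = 1 -> inner w w = 1 ->
  s ^+ 2 = 1 -> t ^+ 2 = 1 ->
  4 * s * inner u v + 4 * t * inner v w - 6 <= 2 * s * t * inner u w.
Proof.
rewrite !innerE => Hu Hv Hw s2 t2.
have key : 0 <= \sum_k (u 0 k - 2 * s * v 0 k + s * t * w 0 k) ^+ 2.
  by apply: sumr_ge0 => k _; exact: sqr_ge0.
have E : forall k, (u 0 k - 2 * s * v 0 k + s * t * w 0 k) ^+ 2 =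
   u 0 k * u 0 k + (4 * s ^+ 2) * (v 0 k * v 0 k) + (s ^+ 2 * t ^+ 2) * (w 0 k * w 0 k)
   + (- (4 * s)) * (u 0 k * v 0 k) + (2 * s * t) * (u 0 k * w 0 k)
   + (- (4 * s ^+ 2 * t)) * (v 0 k * w 0 k).
  by move=> k; ring.
rewrite (eq_bigr _ (fun k _ => E k)) in key.
rewrite !big_split /= -!mulr_sumr Hu Hv Hw s2 t2 in key.
lra.
Qed.

Lemma sgnE (R : realType) (p : R) : exists s : R, (s = 1 \/ s = -1) /\ s * p = `|p|.
Proof.
case: (lerP 0 p) => h.
  by exists 1; rewrite mul1r ger0_norm //; split; [left|].
by exists (-1); rewrite ltr0_norm // mulN1r; split; [right|].
Qed.

Lemma sgn_sq (R : realType) (s : R) : (s = 1 \/ s = -1) -> s ^+ 2 = 1.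
Proof. by case=> ->; rewrite ?sqrrN expr1n. Qed.

Lemma sgn_norm (R : realType) (s : R) : (s = 1 \/ s = -1) -> `|s| = 1.
Proof. by case=> ->; rewrite ?normrN normr1. Qed.

Lemma trans_rel (R : realType) d n (U : 'I_n -> 'rV[R]_d) (eps : R) i j k :
  0 <= eps -> eps <= 1 / 256%:R -> on_sphere U -> eps_inactive U eps ->
  1 - eps <= `|Amat U i j| -> 1 - eps <= `|Amat U j k| -> 1 - eps <= `|Amat U i k|.
Proof.
move=> e0 e1 HS HI hij hjk.
have [s [Hs Es]] := @sgnE R (Amat U i j).
have [t [Ht Et]] := @sgnE R (Amat U j k).
have T := @tri R d (U i) (U j) (U k) s t (HS i) (HS j) (HS k) (@sgn_sq R s Hs) (@sgn_sq R t Ht).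
rewrite /Amat in Es Et hij hjk *.
have H1 : s * t * inner (U i) (U k) <= `|inner (U i) (U k)|.
  case: Hs => ->; case: Ht => ->;
    rewrite ?(mul1r, mulN1r, mulr1, mulrN1, opprK);
    first [exact: ler_norm | rewrite -[X in _ <= X]normrN; exact: ler_norm].
have H2 : 1 - 4 * eps <= `|inner (U i) (U k)|.
  have : 4 * s * inner (U i) (U j) = 4 * `|inner (U i) (U j)| by rewrite -Es mulrA.
  have : 4 * t * inner (U j) (U k) = 4 * `|inner (U j) (U k)| by rewrite -Et mulrA.
  lra.
case: (HI i k); rewrite /Amat => // h.
have : eps < 1 - 4 * eps.
  have : 1 / 256%:R = (256%:R)^-1 :> R by rewrite div1r.
  move=> E; rewrite E in e1.
  have : (256%:R : R)^-1 * 256%:R = 1 by rewrite mulVf // pnatr_eq0.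
  nra.
lra.
Qed.

Definition crel (R : realType) d n (U : 'I_n -> 'rV[R]_d) (eps : R) : rel 'I_n :=
  fun a b => 1 - eps <= `|Amat U a b|.

Arguments crel {R d n}.
Arguments trans_rel {R d n}.

Lemma Amat_sym (R : realType) d n (U : 'I_n -> 'rV[R]_d) i j : Amat U i j = Amat U j i.
Proof. by rewrite /Amat innerC. Qed.
Arguments Amat_sym {R d n}.

Section Part1.
Variables (R : realType) (d n : nat) (U : 'I_n -> 'rV[R]_d) (eps : R).
Hypotheses (e0 : 0 <= eps) (e1 : eps <= 1 / 256%:R) (HS : on_sphere U)
  (HI : eps_inactive U eps).

Lemma e_half : eps < 1 - eps.
Proof.
have E : 1 / 256%:R = (256%:R)^-1 :> R by rewrite div1r.
have e2 := e1; rewrite E in e2.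
have : (256%:R : R)^-1 * 256%:R = 1 by rewrite mulVf // pnatr_eq0.
nra.
Qed.

Lemma crel_refl i : crel U eps i i.
Proof. by rewrite /crel /Amat HS normr1; rewrite lerBlDr lerDl. Qed.

Lemma crel_sym i j : crel U eps i j = crel U eps j i.
Proof. by rewrite /crel Amat_sym. Qed.

Lemma crel_trans i j k : crel U eps i j -> crel U eps j k -> crel U eps i k.
Proof. exact: trans_rel. Qed.

Lemma crel_equiv : {in [set: 'I_n] & &, equivalence_rel (crel U eps)}.
Proof.
move=> x y z _ _ _; split; first exact: crel_refl.
move=> hxy; apply/idP/idP => h.
  by apply: crel_trans h; rewrite crel_sym.
exact: crel_trans h.
Qed.

Lemma not_crel i j : `|Amat U i j| <= eps -> ~~ crel U eps i j.
Proof. move=> h; rewrite /crel -ltNge; have := e_half; lra. Qed.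

Lemma cluster_class C x : is_cluster U eps C -> x \in C ->
  C = [set y in [set: 'I_n] | crel U eps x y].
Proof.
move=> [_ [H1 H2]] xC; apply/setP => y; rewrite !inE /=.
case: (boolP (y \in C)) => yC; first by rewrite /crel H1.
by apply/esym/negbTE/not_crel/H2.
Qed.

Lemma class_cluster x : is_cluster U eps [set y in [set: 'I_n] | crel U eps x y].
Proof.
split; first by apply/set0Pn; exists x; rewrite !inE crel_refl.
split.
  move=> i j; rewrite !inE /= => hi hj.
  by apply: (@crel_trans i x j) => //; rewrite crel_sym.
move=> i j; rewrite !inE /= => hi hj.
case: (HI i j) => // h.
by move/negP: hj; case; apply: crel_trans hi h.
Qed.

Lemma unique_part P : cluster_partition U eps P ->
  P = equivalence_partition (crel U eps) [set: 'I_n].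
Proof.
move=> [Hp Hc]; apply/setP => C; apply/idP/idP => HC.
  have := Hc C HC => Cc.
  have [x xC] : exists x, x \in C by apply/set0Pn; case: Cc.
  by apply/imsetP; exists x => //; apply: cluster_class.
case/imsetP: HC => x _ ->.
have : x \in cover P by rewrite (cover_partition Hp) inE.
case/bigcupP => C' C'P xC'.
by rewrite -(@cluster_class C' x (Hc C' C'P) xC').
Qed.

Lemma exists_part : cluster_partition U eps (equivalence_partition (crel U eps) [set: 'I_n]).
Proof.
split; first exact: equivalence_partitionP crel_equiv.
move=> C /imsetP [x _ ->]; exact: class_cluster.
Qed.

End Part1.

Section Part2.
Variables (R : realType) (d n : nat) (U : 'I_n -> 'rV[R]_d) (eps : R).
Hypotheses (e0 : 0 <= eps) (HS : on_sphere U) (d0 : (0 < d)%N).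

Lemma card_le P : eps < 1 / (d * (d + 1))%:R -> cluster_partition U eps P ->
  (#|P| <= d)%N.
Proof.
move=> hd [Hp Hc].
rewrite leqNgt; apply/negP => hlt.
have hde : d%:R * eps < 1.
  have hpos : (0 : R) < (d * (d + 1))%:R.
    by rewrite ltr0n muln_gt0 d0 addn1.
  rewrite mul1r -[X in _ < X]mul1r ltr_pdivlMr // in hd.
  have : d%:R * eps <= (d * (d + 1))%:R * eps.
    apply: ler_wpM2r => //; rewrite ler_nat; apply: leq_pmulr; by rewrite addn1.
  move=> h; rewrite mulrC in hd; exact: le_lt_trans h hd.
case/and3P: Hp => _ Htriv _.
pose Cl (k : 'I_d.+1) : {set 'I_n} := enum_val (widen_ord hlt k).
have ClP : forall k, Cl k \in P by move=> k; exact: enum_valP.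
have ClN : forall k, exists x, x \in Cl k.
  by move=> k; apply/set0Pn; case: (Hc _ (ClP k)).
have [x0 _] := ClN ord0.
pose f k := odflt x0 [pick x in Cl k].
have fP : forall k, f k \in Cl k.
  move=> k; rewrite /f; case: pickP => [x //|h].
  by have [x xC] := ClN k; move: (h x); rewrite xC.
have ClI : forall k l, k != l -> Cl k != Cl l.
  move=> k l; apply: contra => /eqP /enum_val_inj /(congr1 val) /= kl.
  by apply/eqP/val_inj.
have fA : forall k l, k != l -> `|Amat U (f k) (f l)| <= eps.
  move=> k l kl; rewrite Amat_sym.
  have [_ [_ H2]] := Hc _ (ClP l); apply: H2 => //.
  have := (trivIsetP Htriv) _ _ (ClP k) (ClP l) (ClI _ _ kl).
  by move=> dj; rewrite (disjointFr dj (fP k)).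
pose M : 'M[R]_(d.+1, d) := \matrix_(k, j) U (f k) 0 j.
have nrf : ~~ row_free M.
  apply/negP => /eqP h; have := rank_leq_col M; by rewrite h ltnn.
rewrite -kermx_eq0 in nrf.
case/matrix0Pn: nrf => i [j Hij].
pose c := row i (kermx M).
have cM : c *m M = 0 by rewrite /c -row_mul mulmx_ker row0.
case: (@arg_maxP _ R _ ord0 xpredT (fun k => `|c 0 k|) isT) => m _ Hm.
have cm_pos : 0 < `|c 0 m|.
  apply: lt_le_trans (Hm j isT); rewrite normr_gt0 /c mxE //.
have E : \sum_k c 0 k * Amat U (f k) (f m) = 0.
  have : (c *m M *m (U (f m))^T) 0 0 = 0 by rewrite cM mul0mx mxE.
  rewrite -mulmxA mxE => H; rewrite -[RHS]H; apply: eq_bigr => k _; congr (_ * _).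
  rewrite /Amat innerE mxE; apply: eq_bigr => l _; by rewrite !mxE.
rewrite (bigD1 m) //= /Amat HS mulr1 in E.
have E2 : c 0 m = - \sum_(k | k != m) c 0 k * Amat U (f k) (f m).
  by apply/eqP; rewrite -addr_eq0 E.
have B : `|c 0 m| <= `|c 0 m| * eps *+ #|predC1 m|.
  rewrite -sumr_const {1}E2 normrN.
  apply: le_trans (ler_norm_sum _ _ _) _.
  apply: ler_sum => k km; rewrite normrM.
  apply: ler_pM => //; first exact: Hm.
  by apply: fA.
rewrite cardC1 card_ord /= -mulr_natr in B.
have : `|c 0 m| * eps * d%:R < `|c 0 m|.
  by rewrite -mulrA gtr_pMr // mulrC.
by rewrite ltNge B.
Qed.

End Part2.

Theorem mainTheorem10 (R : realType) (d n : nat) (U : 'I_n -> 'rV[R]_d) (eps : R) :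
  (2 <= d)%N -> (2 <= n)%N ->
  0 <= eps -> eps <= 1 / 256%:R ->
  on_sphere U -> eps_inactive U eps ->
  (exists P : {set {set 'I_n}},
      cluster_partition U eps P /\
      forall P' : {set {set 'I_n}}, cluster_partition U eps P' -> P' = P) /\
  (eps < 1 / (d * (d + 1))%:R ->
     forall P : {set {set 'I_n}}, cluster_partition U eps P -> (#|P| <= d)%N).
Proof.
move=> d2 _ e0 e1 HS HI; split.
  exists (equivalence_partition (crel U eps) [set: 'I_n]); split.
    exact: exists_part.
  by move=> P' HP'; apply: unique_part.
by move=> hd P HP; apply: card_le hd HP => //; apply: leq_trans d2.
Qed.
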